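(* Let $\lambda=(\lambda_1,\ldots,\lambda_\ell)$ be a partition with $\ell$ positive parts, and let $n\geq\ell$. If there exists $p\in\{1,\ldots,\ell-2\}$ such that $\lambda_p>\lambda_{p+1}\geq\lambda_{p+2}\geq 2$, then the poset $\mathcal B_\lambda^n$ is not a lattice.
   Context: For $N\geq 1$ and a partition $\nu$ with at most $N$ positive parts, $\mathcal B_\nu^N$ is the set of semistandard Young tableaux of shape $\nu$ (rows weakly increasing, columns strictly increasing) with entries in $\{1,\ldots,N+1\}$, partially ordered by the reflexive transitive closure of $T<F_i(T)$ for $i\in\{1,\ldots,N\}$ with $F_i(T)\neq 0$. Here $F_i$ is the type A crystal lowering operator: in the reading word of $T$ (rows read from bottom to top, each row left to right) keep only letters $i$ and $i+1$, replace each $i$ by '')'' and each $i+1$ by ''('', and match parentheses in the usual way; if there is no unmatched '')'', $F_i(T)=0$; otherwise $F_i(T)$ is obtained by changing the entry $i$ corresponding to the rightmost unmatched '')'' into $i+1$. *)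

(* Defs.v *)
From mathcomp Require Import all_boot.
From Stdlib Require Import Relation_Operators.
Set Implicit Arguments. Unset Strict Implicit. Unset Printing Implicit Defensive.

(* A tableau is a list of rows, row 1 (top) first; entries are nats. *)
Definition tableau := seq (seq nat).

(* entry in row r, column c (0-indexed) *)
Definition entry (T : tableau) (r c : nat) : nat := nth 0 (nth [::] T r) c.

Definition is_ssyt (N : nat) (nu : seq nat) (T : tableau) : Prop :=
  [/\ map size T = nu,
      all (fun r => sorted leq r) T,
      all (fun r => all (fun a => (1 <= a) && (a <= N.+1)) r) T &
      forall r c, r.+1 < size T -> c < size (nth [::] T r.+1) ->
        entry T r c < entry T r.+1 c].

Definition reading_word (T : tableau) : seq nat := flatten (rev T).

(* Positions (in the reading word) of the unmatched ")" = letters i,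
   where each i.+1 is "(" ; [op] counts currently open "(". *)
Fixpoint unmatched (i op pos : nat) (w : seq nat) : seq nat :=
  match w with
  | [::] => [::]
  | a :: w' =>
      if a == i.+1 then unmatched i op.+1 pos.+1 w'
      else if a == i then
        (if 0 < op then unmatched i op.-1 pos.+1 w'
         else pos :: unmatched i op pos.+1 w')
      else unmatched i op pos.+1 w'
  end.

(* Crystal lowering operator F_i; None stands for 0. *)
Definition crystalF (i : nat) (T : tableau) : option tableau :=
  let w := reading_word T in
  match rev (unmatched i 0 0 w) with
  | [::] => None
  | k :: _ => Some (rev (reshape (map size (rev T)) (set_nth 0 w k i.+1)))
  end.

Definition fstep (N : nat) (T U : tableau) : Prop :=
  exists i, 1 <= i <= N /\ crystalF i T = Some U.

Definition Ble (N : nat) : tableau -> tableau -> Prop :=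
  clos_refl_trans tableau (fstep N).

Definition is_join (N : nat) (nu : seq nat) (x y z : tableau) : Prop :=
  [/\ is_ssyt N nu z, Ble N x z, Ble N y z &
      forall u, is_ssyt N nu u -> Ble N x u -> Ble N y u -> Ble N z u].

Definition is_meet (N : nat) (nu : seq nat) (x y z : tableau) : Prop :=
  [/\ is_ssyt N nu z, Ble N z x, Ble N z y &
      forall u, is_ssyt N nu u -> Ble N u x -> Ble N u y -> Ble N u z].

Definition B_is_lattice (N : nat) (nu : seq nat) : Prop :=
  forall x y, is_ssyt N nu x -> is_ssyt N nu y ->
    (exists z, is_join N nu x y z) /\ (exists z, is_meet N nu x y z).

(* Main.v *)
Require Import Defs.
From mathcomp Require Import all_boot.
From mathcomp Require Import zify.
From Stdlib Require Import Relation_Operators.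
Set Implicit Arguments. Unset Strict Implicit. Unset Printing Implicit Defensive.


Fixpoint fop (i op : nat) (w : seq nat) : nat :=
  match w with
  | [::] => op
  | a :: w' =>
      if a == i.+1 then fop i op.+1 w'
      else if a == i then fop i op.-1 w'
      else fop i op w'
  end.

Lemma unmatched_cat i op pos w1 w2 :
  unmatched i op pos (w1 ++ w2) =
  unmatched i op pos w1 ++ unmatched i (fop i op w1) (pos + size w1) w2.
Proof.
elim: w1 op pos => [|a w1 IH] op pos /=; first by rewrite addn0.
case: ifP => _; first by rewrite IH addSnnS.
case: ifP => _; last by rewrite IH addSnnS.
case: op => [|op] /=; by rewrite IH addSnnS.
Qed.

Lemma unmatched_nth i op pos w k : k \in unmatched i op pos w ->
  [/\ pos <= k, k < pos + size w & nth 0 w (k - pos) = i].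
Proof.
elim: w op pos => [|a w IH] op pos //=.
have H: forall op', k \in unmatched i op' pos.+1 w ->
   [/\ pos <= k, k < pos + (size w).+1 & nth 0 (a :: w) (k - pos) = i].
  move=> op' /IH [h1 h2 h3]; split; try lia.
  have ->: k - pos = (k - pos.+1).+1 by lia. done.
case: ifP => _; first exact: H.
case: ifP => /eqP ai; last exact: H.
case: ifP => _; first exact: H.
rewrite inE => /orP [/eqP ->|]; last exact: H.
by rewrite subnn; split => //; lia.
Qed.

Lemma unmatched_shift i op pos d w :
  unmatched i op (d + pos) w = map (addn d) (unmatched i op pos w).
Proof.
elim: w op pos => [|a w IH] op pos //=.
case: ifP => _; first by rewrite -addnS IH.
case: ifP => _; last by rewrite -addnS IH.
case: ifP => _; by rewrite -addnS IH.
Qed.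

Definition noil (i : nat) (w : seq nat) := all (fun v => (v != i) && (v != i.+1)) w.

Lemma unmatched_noil i op pos w w2 : noil i w ->
  unmatched i op pos (w ++ w2) = unmatched i op (pos + size w) w2.
Proof.
elim: w op pos => [|a w IH] op pos /=; first by rewrite addn0.
case/andP => /andP [/negbTE -> /negbTE ->] h. by rewrite IH // addSnnS.
Qed.

Lemma unmatched_nil i op pos : unmatched i op pos [::] = [::].
Proof. by []. Qed.

Lemma UA i op pos k v w : v != i -> v != i.+1 ->
  unmatched i op pos (nseq k v ++ w) = unmatched i op (pos + k) w.
Proof.
move=> h1 h2; rewrite unmatched_noil ?size_nseq //.
by apply/allP => x /nseqP [-> _]; rewrite h1 h2.
Qed.

Lemma UB i op pos k w :
  unmatched i op pos (nseq k i.+1 ++ w) = unmatched i (op + k) (pos + k) w.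
Proof.
elim: k op pos => [|k IH] op pos /=; first by rewrite !addn0.
by rewrite eqxx IH; congr unmatched; lia.
Qed.

Lemma UC i op pos k w :
  unmatched i op pos (nseq k i ++ w) =
  iota (pos + op) (k - op) ++ unmatched i (op - k) (pos + k) w.
Proof.
elim: k op pos => [|k IH] op pos /=.
  by rewrite subn0 addn0.
have -> : (i == i.+1) = false by lia.
rewrite eqxx.
case: op => [|op] /=.
  by rewrite IH ?subn0 ?sub0n ?addn0 /= addSnnS.
rewrite IH; congr (_ ++ unmatched _ _ _ _); try lia; congr iota; lia.
Qed.

Definition rw := reading_word.

Lemma crystalF_step i T U : crystalF i T = Some U ->
  exists k, [/\ k < size (rw T), nth 0 (rw T) k = i &
                rw U = set_nth 0 (rw T) k i.+1].
Proof.
rewrite /crystalF.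
case E: (rev (unmatched i 0 0 (reading_word T))) => [|k l] //= [<-].
have: k \in unmatched i 0 0 (reading_word T) by rewrite -mem_rev E inE eqxx.
case/unmatched_nth => _; rewrite add0n subn0 => hk hn.
exists k; split => //.
rewrite /rw /reading_word revK reshapeKr // size_set_nth.
rewrite -/(reading_word T) /reading_word size_flatten /shape.
move: hk; rewrite /reading_word size_flatten /shape; lia.
Qed.

Lemma set_nth_sum w k i : k < size w -> nth 0 w k = i ->
  sumn (set_nth 0 w k i.+1) = (sumn w).+1.
Proof.
move=> hk hn; rewrite sumn_set_nth_ltn // hn.
have : i <= sumn w. rewrite -hn. elim: w k hk {hn} => [|a w IH] [|k] //= h.
  lia. move: (IH k h); lia.
lia.
Qed.

Lemma all2_refl w : all2 leq w w.
Proof. by elim: w => //= a w ->; rewrite leqnn. Qed.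

Lemma all2_set_nth w k i : k < size w -> nth 0 w k = i ->
  all2 leq w (set_nth 0 w k i.+1).
Proof.
elim: w k => [|a w IH] [|k] //= hk h.
  by rewrite h leqnSn all2_refl.
by rewrite leqnn IH.
Qed.


Lemma all2_trans u v w : all2 leq u v -> all2 leq v w -> all2 leq u w.
Proof.
elim: u v w => [|a u IH] [|b v] [|c w] //= /andP [h1 h2] /andP [h3 h4].
by rewrite (leq_trans h1 h3) (IH _ _ h2 h4).
Qed.

Lemma all2_sum u v : all2 leq u v -> sumn u <= sumn v.
Proof.
elim: u v => [|a u IH] [|b v] //= /andP [h1 h2]; exact: leq_add h1 (IH _ h2).
Qed.

Lemma fstep_rw N T U : fstep N T U ->
  sumn (rw U) = (sumn (rw T)).+1 /\ all2 leq (rw T) (rw U).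
Proof.
case=> i [_ /crystalF_step [k [h1 h2 ->]]].
by rewrite set_nth_sum // all2_set_nth.
Qed.

Lemma Ble_rw N T U : Ble N T U ->
  all2 leq (rw T) (rw U) /\ (T = U \/ sumn (rw T) < sumn (rw U)).
Proof.
elim => [x y /fstep_rw [h1 h2]| x | x y z _ [h1 h2] _ [h3 h4]].
- by split => //; right; rewrite h1.
- by split; [exact: all2_refl | left].
- split; first exact: all2_trans h1 h3.
  case: h2 => [->|h2] //; case: h4 => [<-|h4]; [by right|right].
  exact: ltn_trans h2 h4.
Qed.

Lemma Ble_first N T U : Ble N T U -> T = U \/ exists V, fstep N T V /\ Ble N V U.
Proof.
elim => [x y h| x | x y z _ h1 h2 h3].
- right; exists y; split => //; exact: rt_refl.
- by left.
- case: h1 => [->|[V [hV hVy]]]; first exact: h3.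
  right; exists V; split => //.
  exact: rt_trans hVy h2.
Qed.

Lemma Ble_eq N T U : Ble N T U -> sumn (rw T) = sumn (rw U) -> T = U.
Proof. by case/Ble_rw => _ [//|h] e; move: h; rewrite e ltnn. Qed.

Lemma Ble_one N T U : Ble N T U -> sumn (rw U) = (sumn (rw T)).+1 -> fstep N T U.
Proof.
case/Ble_first => [->|[V [hV hVU]]] e; first by move: e; lia.
have [e2 _] := fstep_rw hV.
have <- // := Ble_eq hVU; lia.
Qed.


Inductive five := F5 of nat & nat & nat & nat & nat.


Definition R1 (lam : seq nat) q E := let: F5 e1 e2 _ _ _ := E in
  nseq (nth 0 lam q - 2) q.+1 ++ [:: e1; e2].
Definition R2 (lam : seq nat) q E := let: F5 _ _ e3 _ _ := E in
  nseq (nth 0 lam q.+1 - 1) q.+2 ++ [:: e3].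
Definition R3 (lam : seq nat) q E := let: F5 _ _ _ e4 e5 := E in
  nseq (nth 0 lam q.+2 - 2) q.+3 ++ [:: e4; e5].
Definition topr (lam : seq nat) r := nseq (nth 0 lam r) r.+1.
Definition botr (lam : seq nat) r := nseq (nth 0 lam r) r.+2.
Definition G lam q E r :=
  if r < q then topr lam r else if r == q then R1 lam q E
  else if r == q.+1 then R2 lam q E else if r == q.+2 then R3 lam q E
  else botr lam r.
Definition Tab lam q E := mkseq (G lam q E) (size lam).
Definition Wt lam q := flatten (rev (mkseq (topr lam) q)).
Definition Wb lam q := flatten (rev (mkseq (fun r => botr lam (q.+3 + r)) (size lam - q.+3))).
Definition mid lam q E := R3 lam q E ++ R2 lam q E ++ R1 lam q E.

Lemma rw_Tab lam q E : q.+3 <= size lam ->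
  rw (Tab lam q E) = Wb lam q ++ (mid lam q E ++ Wt lam q).
Proof.
move=> hq; rewrite /rw /reading_word /Tab /mkseq.
have ->: size lam = q + (3 + (size lam - q.+3)) by lia.
rewrite !iotaD !map_cat add0n.
have ->: [seq G lam q E i | i <- iota 0 q] = mkseq (topr lam) q.
  apply/eq_in_map => r; rewrite mem_iota /G => /andP [_ h]; by rewrite h.
have ->: [seq G lam q E i | i <- iota q 3] = [:: R1 lam q E; R2 lam q E; R3 lam q E].
  rewrite /= /G ltnn eqxx ltnNge leqnSn /= ltnNge leqW //= eqxx.
  have ->: (q.+1 == q) = false by lia.
  have ->: (q.+2 == q) = false by lia.
  have ->: (q.+2 == q.+1) = false by lia.
  by rewrite eqxx.
have ->: [seq G lam q E i | i <- iota (q + 3) (size lam - q.+3)] =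
         mkseq (fun r => botr lam (q.+3 + r)) (size lam - q.+3).
  have e: iota (q + 3) (size lam - q.+3) = map (addn q.+3) (iota 0 (size lam - q.+3)) by rewrite -iotaDl addn0 addn3.
  rewrite e -map_comp /mkseq; apply: eq_map => r /=; rewrite /G.
  have ->: (q.+3 + r < q) = false by lia.
  have ->: (q.+3 + r == q) = false by lia.
  have ->: (q.+3 + r == q.+1) = false by lia.
  by have ->: (q.+3 + r == q.+2) = false by lia.
rewrite !rev_cat !flatten_cat /Wb /Wt /mid /mkseq.
by rewrite /rev /= -!catA.
Qed.

Lemma all_flatten (a : pred nat) ss : all a (flatten ss) = all (all a) ss.
Proof. by elim: ss => //= s ss IH; rewrite all_cat IH. Qed.

Lemma noil_Wt lam q i : q < i -> noil i (Wt lam q).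
Proof.
move=> hi; rewrite /noil /Wt all_flatten all_rev /mkseq all_map.
apply/allP => r; rewrite mem_iota /= /topr all_nseq => h.
by apply/orP; right; apply/andP; split; apply/eqP; lia.
Qed.

Lemma noil_Wb lam q i : i <= q.+3 -> noil i (Wb lam q).
Proof.
move=> hi; rewrite /noil /Wb all_flatten all_rev /mkseq all_map.
apply/allP => r; rewrite mem_iota /= /botr all_nseq => h.
by apply/orP; right; apply/andP; split; apply/eqP; lia.
Qed.

Lemma noil_nil i op pos w : noil i w -> unmatched i op pos w = [::].
Proof. by move=> h; rewrite -(cats0 w) unmatched_noil. Qed.

Lemma set_nth_catR (s1 s2 : seq nat) k y :
  set_nth 0 (s1 ++ s2) (size s1 + k) y = s1 ++ set_nth 0 s2 k y.
Proof. by elim: s1 => //= a s1 ->. Qed.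

Lemma set_nth_catL (s1 s2 : seq nat) k y : k < size s1 ->
  set_nth 0 (s1 ++ s2) k y = set_nth 0 s1 k y ++ s2.
Proof. by elim: s1 k => [|a s1 IH] [|k] //= h; rewrite IH. Qed.

Lemma size_G lam q E E' r : size (G lam q E r) = size (G lam q E' r).
Proof.
case: E => e1 e2 e3 e4 e5; case: E' => f1 f2 f3 f4 f5.
rewrite /G; repeat case: ifP => _ //; by rewrite /= !size_cat.
Qed.

Lemma F_T lam q E E' i l j : q.+3 <= size lam -> q < i <= q.+3 ->
  unmatched i 0 0 (mid lam q E) = l ++ [:: j] ->
  set_nth 0 (mid lam q E) j i.+1 = mid lam q E' ->
  crystalF i (Tab lam q E) = Some (Tab lam q E').
Proof.
move=> hq /andP [hi1 hi2] H H2.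
have hj : j < size (mid lam q E).
  have: j \in unmatched i 0 0 (mid lam q E) by rewrite H mem_cat inE eqxx orbT.
  by case/unmatched_nth.
rewrite /crystalF -/(rw _) rw_Tab // unmatched_noil ?noil_Wb // add0n.
rewrite unmatched_cat (noil_nil _ _ (noil_Wt lam hi1)) cats0.
have ->: unmatched i 0 (size (Wb lam q)) (mid lam q E) =
   map (addn (size (Wb lam q))) (l ++ [:: j]) by rewrite -H -unmatched_shift addn0.
rewrite map_cat rev_cat /= set_nth_catR set_nth_catL // H2 -rw_Tab //.
congr Some; rewrite /rw /reading_word.
have ->: [seq size i | i <- rev (Tab lam q E)] = shape (rev (Tab lam q E')).
  rewrite /shape !map_rev; congr rev; rewrite /Tab /mkseq -!map_comp.
  apply: eq_map => r /=; exact: size_G.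
by rewrite flattenK revK.
Qed.


Ltac bsolve := repeat (match goal with
  | |- is_true (_ && _) => apply/andP; split
  | |- is_true (_ || _) => apply/orP; right
  | |- is_true true => done end); try lia.

Lemma G_top lam q E r : r < q -> G lam q E r = topr lam r.
Proof. by rewrite /G => ->. Qed.
Lemma G_q lam q E : G lam q E q = R1 lam q E.
Proof. by rewrite /G ltnn eqxx. Qed.
Lemma G_q1 lam q E : G lam q E q.+1 = R2 lam q E.
Proof. rewrite /G eqxx; have ->: (q.+1 < q) = false by lia. by have ->: (q.+1 == q) = false by lia. Qed.
Lemma G_q2 lam q E : G lam q E q.+2 = R3 lam q E.
Proof. rewrite /G eqxx; have ->: (q.+2 < q) = false by lia.
have ->: (q.+2 == q) = false by lia. by have ->: (q.+2 == q.+1) = false by lia. Qed.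
Lemma G_bot lam q E r : q.+2 < r -> G lam q E r = botr lam r.
Proof. move=> h; rewrite /G; have ->: (r < q) = false by lia.
have ->: (r == q) = false by lia. have ->: (r == q.+1) = false by lia.
by have ->: (r == q.+2) = false by lia. Qed.

Lemma sorted_nseq_cat k v s : sorted leq s -> path leq v s -> sorted leq (nseq k v ++ s).
Proof.
move=> h1 h2; case: k => [|k] //=.
by elim: k => [|k IH] //=; rewrite leqnn IH.
Qed.

Lemma rowsep A B c m : c < size B -> size B <= size A ->
  all (fun x => x <= m) A -> all (fun x => m < x) B -> nth 0 A c < nth 0 B c.
Proof.
move=> h1 h2 /allP hA /allP hB.
have a1 := hA _ (mem_nth 0 (leq_trans h1 h2)); have b1 := hB _ (mem_nth 0 h1); simpl in *; lia.
Qed.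

Lemma ssyt_Tab n lam q e1 e2 e3 e4 e5 :
 sorted geq lam -> all (fun x => 0 < x) lam -> size lam <= n -> q.+3 <= size lam ->
 nth 0 lam q.+1 < nth 0 lam q -> 2 <= nth 0 lam q.+2 ->
 q.+1 <= e1 -> e1 <= e2 -> e2 <= q.+4 -> e1 < e3 -> q.+2 <= e3 ->
 q.+3 <= e4 -> e4 <= e5 -> e5 <= q.+4 -> e3 < e5 ->
 is_ssyt n lam (Tab lam q (F5 e1 e2 e3 e4 e5)).
Proof.
move=> hs hpos hn hq hab hc h1 h2 h3 h4 h5 h6 h7 h8 h9.
have hsr : forall r, r.+1 < size lam -> nth 0 lam r.+1 <= nth 0 lam r.
  by move=> r hr; move/(sortedP 0): hs => /(_ r hr).
have hbc : nth 0 lam q.+2 <= nth 0 lam q.+1 by apply: hsr.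
have hp : forall r, r < size lam -> 0 < nth 0 lam r.
  by move=> r hr; move/allP: hpos => /(_ _ (mem_nth 0 hr)).
set E := F5 e1 e2 e3 e4 e5.
have hsz : forall r, r < size lam -> size (G lam q E r) = nth 0 lam r.
  move=> r hr.
  have [h|[->|[->|[->|h]]]] : r < q \/ r = q \/ r = q.+1 \/ r = q.+2 \/ q.+2 < r by lia.
  - by rewrite G_top // /topr size_nseq.
  - rewrite G_q /R1 /E size_cat size_nseq /=; lia.
  - rewrite G_q1 /R2 /E size_cat size_nseq /=; lia.
  - rewrite G_q2 /R3 /E size_cat size_nseq /=; lia.
  - by rewrite G_bot // /botr size_nseq.
split.
- apply: (@eq_from_nth _ 0); first by rewrite size_map size_mkseq.
  move=> r; rewrite size_map size_mkseq => hr.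
  by rewrite (nth_map [::]) ?size_mkseq // nth_mkseq // hsz.
- rewrite /Tab /mkseq all_map; apply/allP => r; rewrite mem_iota /= => hr.
  have [h|[->|[->|[->|h]]]] : r < q \/ r = q \/ r = q.+1 \/ r = q.+2 \/ q.+2 < r by lia.
  + by rewrite G_top // /topr -(cats0 (nseq _ _)) sorted_nseq_cat.
  + by rewrite G_q /R1 /E sorted_nseq_cat //= ?h1 ?h2.
  + by rewrite G_q1 /R2 /E sorted_nseq_cat //= ?h5.
  + rewrite G_q2 /R3 /E sorted_nseq_cat //= ?h6 ?h7 //.
  + by rewrite G_bot // /botr -(cats0 (nseq _ _)) sorted_nseq_cat.
- rewrite /Tab /mkseq all_map; apply/allP => r; rewrite mem_iota /= => hr.
  have [h|[->|[->|[->|h]]]] : r < q \/ r = q \/ r = q.+1 \/ r = q.+2 \/ q.+2 < r by lia.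
  + rewrite G_top // /topr all_nseq; bsolve.
  + rewrite G_q /R1 /E all_cat all_nseq /=.
    bsolve.
  + rewrite G_q1 /R2 /E all_cat all_nseq /=.
    bsolve.
  + rewrite G_q2 /R3 /E all_cat all_nseq /=.
    bsolve.
  + rewrite G_bot // /botr all_nseq; bsolve.
- move=> r c; rewrite /Tab size_mkseq => hr; rewrite /entry !nth_mkseq //; try lia.
  move=> hc1.
  have hA : size (G lam q E r.+1) <= size (G lam q E r) by rewrite !hsz //; try lia; apply: hsr.
  have [h|[h|[hh|[hh|[hh|h]]]]] : r.+1 < q \/ r.+1 = q \/ r = q \/ r = q.+1 \/ r = q.+2 \/ q.+2 < r by lia.
  + apply: (rowsep (m := r.+1)) => //.
    * rewrite G_top ?/topr ?all_nseq; try lia. bsolve.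
    * rewrite G_top ?/topr ?all_nseq; try lia. bsolve.
  + apply: (rowsep (m := q)) => //.
    * rewrite G_top ?/topr ?all_nseq; try lia. bsolve.
    * rewrite h G_q /R1 /E all_cat all_nseq /=.
      bsolve.
  + move: hc1 hA; rewrite hh G_q G_q1 /R1 /R2 /E /= !size_cat !size_nseq /= => hc1 _.
    rewrite !nth_cat !size_nseq !nth_nseq.
    have [hc2|hc2] : c < nth 0 lam q.+1 - 1 \/ c = nth 0 lam q.+1 - 1 by lia.
    * have ->: c < nth 0 lam q - 2 by lia. by rewrite hc2.
    * subst c; have ->: (nth 0 lam q.+1 - 1 < nth 0 lam q.+1 - 1) = false by lia.
      rewrite subnn /=.
      have [hc3|hc3] : nth 0 lam q.+1 - 1 < nth 0 lam q - 2 \/ nth 0 lam q.+1 - 1 = nth 0 lam q - 2 by lia.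
      - rewrite hc3; lia.
      - rewrite hc3 ltnn subnn /=; lia.
  + move: hc1 hA; rewrite hh G_q1 G_q2 /R2 /R3 /E /= !size_cat !size_nseq /= => hc1 _.
    rewrite !nth_cat !size_nseq !nth_nseq.
    have [hc2|[hc2|hc2]] : c < nth 0 lam q.+2 - 2 \/ c = nth 0 lam q.+2 - 2 \/ c = nth 0 lam q.+2 - 1 by lia.
    * have ->: c < nth 0 lam q.+1 - 1 by lia. by rewrite hc2.
    * have ->: c < nth 0 lam q.+1 - 1 by lia.
      have ->: (c < nth 0 lam q.+2 - 2) = false by lia.
      have ->: c - (nth 0 lam q.+2 - 2) = 0 by lia. simpl; lia.
    * have ->: (c < nth 0 lam q.+2 - 2) = false by lia.
      have ->: c - (nth 0 lam q.+2 - 2) = 1 by lia.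
      have [hc3|hc3] : c < nth 0 lam q.+1 - 1 \/ c = nth 0 lam q.+1 - 1 by lia.
      - rewrite hc3 /=; lia.
      - rewrite hc3 ltnn subnn /=; lia.
  + rewrite hh; rewrite hh in hc1 hA; apply: (rowsep (m := q.+4)) => //.
    * rewrite G_q2 /R3 /E all_cat all_nseq /=.
      bsolve.
    * rewrite G_bot ?/botr ?all_nseq; try lia. bsolve.
  + apply: (rowsep (m := r.+2)) => //; rewrite G_bot ?/botr ?all_nseq; try lia; bsolve.
Qed.


Lemma nS1 n : (n.+1 == n) = false. Proof. lia. Qed.
Lemma nS2 n : (n.+2 == n) = false. Proof. lia. Qed.
Lemma nS3 n : (n.+3 == n) = false. Proof. lia. Qed.
Lemma nS1' n : (n == n.+1) = false. Proof. lia. Qed.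
Lemma nS2' n : (n == n.+2) = false. Proof. lia. Qed.
Lemma nS3' n : (n == n.+3) = false. Proof. lia. Qed.

Lemma ex_last (s1 : seq nat) x j : x = j -> exists l, s1 ++ [:: x] = l ++ [:: j].
Proof. by move=> ->; exists s1. Qed.

Lemma ex_last2 (s1 : seq nat) x y j : y = j -> exists l, s1 ++ [:: x; y] = l ++ [:: j].
Proof. by move=> ->; exists (s1 ++ [:: x]); rewrite -catA. Qed.

Ltac nsimp := rewrite /= ?eqxx ?nS1 ?nS2 ?nS3 ?nS1' ?nS2' ?nS3' /=.


Ltac run := repeat (nsimp; first [rewrite UB | rewrite UC | (rewrite UA; [|lia|lia])
   | (case: ifP => [?|?]; [exfalso; lia| ]) | (case: ifP => [?|?]; [ |exfalso; lia]) ]).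

Definition Wd q a b c e1 e2 e3 e4 e5 :=
  (nseq (c-2) q.+3 ++ [:: e4; e5]) ++ (nseq (b-1) q.+2 ++ [:: e3]) ++ (nseq (a-2) q.+1 ++ [:: e1; e2]).

Lemma mid_Wd lam q e1 e2 e3 e4 e5 : mid lam q (F5 e1 e2 e3 e4 e5) =
  Wd q (nth 0 lam q) (nth 0 lam q.+1) (nth 0 lam q.+2) e1 e2 e3 e4 e5.
Proof. by []. Qed.


Lemma comp1 q a b c : 2 <= c <= b -> b < a ->
  exists l, unmatched q.+2 0 0 (Wd q a b c q.+1 q.+3 q.+2 q.+3 q.+4) = l ++ [:: c + b - 1].
Proof. move=> hc hb; rewrite /Wd -!catA; run; nsimp; rewrite ?catA; first [apply: ex_last | apply: ex_last2]; lia. Qed.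

Lemma comp2 q a b c : 2 <= c <= b -> b < a ->
  exists l, unmatched q.+1 0 0 (Wd q a b c q.+1 q.+3 q.+3 q.+3 q.+4) = l ++ [:: c + b + a - 2].
Proof. move=> hc hb; rewrite /Wd -!catA; run; nsimp; rewrite ?catA; first [apply: ex_last | apply: ex_last2]; lia. Qed.

Lemma comp3 q a b c : 2 <= c <= b -> b < a ->
  exists l, unmatched q.+2 0 0 (Wd q a b c q.+2 q.+2 q.+3 q.+3 q.+4) = l ++ [:: c + b + a - 1].
Proof. move=> hc hb; rewrite /Wd -!catA; run; nsimp; rewrite ?catA; first [apply: ex_last | apply: ex_last2]; lia. Qed.

Lemma comp4 q a b c : 2 <= c <= b -> b < a ->
  exists l, unmatched q.+3 0 0 (Wd q a b c q.+1 q.+3 q.+2 q.+3 q.+4) = l ++ [:: c - 2].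
Proof. move=> hc hb; rewrite /Wd -!catA; run; nsimp; rewrite ?catA; first [apply: ex_last | apply: ex_last2]; lia. Qed.

Lemma comp5 q a b c : 2 <= c <= b -> b < a ->
  exists l, unmatched q.+2 0 0 (Wd q a b c q.+1 q.+3 q.+2 q.+4 q.+4) = l ++ [:: c + b - 1].
Proof. move=> hc hb; rewrite /Wd -!catA; run; nsimp; rewrite ?catA; first [apply: ex_last | apply: ex_last2]; lia. Qed.

Lemma comp6 q a b c : 2 <= c <= b -> b < a ->
  exists l, unmatched q.+1 0 0 (Wd q a b c q.+1 q.+3 q.+3 q.+4 q.+4) = l ++ [:: c + b + a - 2].
Proof. move=> hc hb; rewrite /Wd -!catA; run; nsimp; rewrite ?catA; first [apply: ex_last | apply: ex_last2]; lia. Qed.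

Lemma comp7 q a b c : 2 <= c <= b -> b < a ->
  exists l, unmatched q.+3 0 0 (Wd q a b c q.+2 q.+2 q.+3 q.+3 q.+4) = l ++ [:: c - 2].
Proof. move=> hc hb; rewrite /Wd -!catA; run; nsimp; rewrite ?catA; first [apply: ex_last | apply: ex_last2]; lia. Qed.

Lemma comp8 q a b c : 2 <= c <= b -> b < a ->
  exists l, unmatched q.+2 0 0 (Wd q a b c q.+2 q.+2 q.+3 q.+4 q.+4) = l ++ [:: c + b + a - 1].
Proof. move=> hc hb; rewrite /Wd -!catA; run; nsimp; rewrite ?catA; first [apply: ex_last | apply: ex_last2]; lia. Qed.

Lemma comp9 q a b c : 2 <= c <= b -> b < a ->
  exists l, unmatched q.+3 0 0 (Wd q a b c q.+2 q.+3 q.+3 q.+3 q.+4) = l ++ [:: c + b + a - 1].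
Proof. move=> hc hb; rewrite /Wd -!catA; run; nsimp; rewrite ?catA; first [apply: ex_last | apply: ex_last2]; lia. Qed.

Lemma snc (s1 s2 : seq nat) n k y : n = size s1 + k ->
  set_nth 0 (s1 ++ s2) n y = s1 ++ set_nth 0 s2 k y.
Proof. by move=> ->; rewrite set_nth_catR. Qed.

Lemma setE4 q a b c e1 e2 e3 e4 e5 v : 2 <= c ->
  set_nth 0 (Wd q a b c e1 e2 e3 e4 e5) (c - 2) v = Wd q a b c e1 e2 e3 v e5.
Proof.
move=> hc; rewrite /Wd -catA (@snc _ _ _ 0) ?size_nseq ?addn0 //; by rewrite -[in RHS]catA.
Qed.

Lemma setE3 q a b c e1 e2 e3 e4 e5 v : 2 <= c -> 1 <= b ->
  set_nth 0 (Wd q a b c e1 e2 e3 e4 e5) (c + b - 1) v = Wd q a b c e1 e2 v e4 e5.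
Proof.
move=> hc hb; rewrite /Wd -!catA (@snc _ _ _ (b - 1).+2); last by rewrite size_nseq; lia.
rewrite /= (@snc _ _ _ 0) ?size_nseq ?addn0 //.
Qed.

Lemma setE1 q a b c e1 e2 e3 e4 e5 v : 2 <= c -> 1 <= b -> 2 <= a ->
  set_nth 0 (Wd q a b c e1 e2 e3 e4 e5) (c + b + a - 2) v = Wd q a b c v e2 e3 e4 e5.
Proof.
move=> hc hb ha; rewrite /Wd -!catA (@snc _ _ _ (b + a - 2).+2); last by rewrite size_nseq; lia.
rewrite /= (@snc _ _ _ (a - 2).+1); last by rewrite size_nseq; lia.
rewrite /= (@snc _ _ _ 0) ?size_nseq ?addn0 //.
Qed.

Lemma setE2 q a b c e1 e2 e3 e4 e5 v : 2 <= c -> 1 <= b -> 2 <= a ->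
  set_nth 0 (Wd q a b c e1 e2 e3 e4 e5) (c + b + a - 1) v = Wd q a b c e1 v e3 e4 e5.
Proof.
move=> hc hb ha; rewrite /Wd -!catA (@snc _ _ _ (b + a - 1).+2); last by rewrite size_nseq; lia.
rewrite /= (@snc _ _ _ (a - 1).+1); last by rewrite size_nseq; lia.
rewrite /= (@snc _ _ _ 1) ?size_nseq ?addn0 //; lia.
Qed.


Fixpoint maxle (u v t : seq nat) : bool :=
  match u, v, t with
  | a :: u', b :: v', c :: t' => (c <= maxn a b) && maxle u' v' t'
  | [::], [::], [::] => true
  | _, _, _ => false
  end.

Lemma maxle_eq u v s t : all2 leq u s -> all2 leq v s -> all2 leq s t -> maxle u v t -> s = t.
Proof.
elim: s u v t => [|x s IH] [|a u] [|b v] [|c t] //= /andP [h1 h2] /andP [h3 h4] /andP [h5 h6] /andP [h7 h8].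
rewrite (IH u v t) //; congr (_ :: _); lia.
Qed.

Lemma maxle_cat u1 u2 v1 v2 t1 t2 : size u1 = size t1 -> size v1 = size t1 ->
  maxle (u1 ++ u2) (v1 ++ v2) (t1 ++ t2) = maxle u1 v1 t1 && maxle u2 v2 t2.
Proof.
elim: t1 u1 v1 => [|c t1 IH] [|a u1] [|b v1] //= [e1] [e2].
by rewrite IH // andbA.
Qed.

Lemma maxle_refl w : maxle w w w.
Proof. elim: w => //= a w ->; rewrite andbT; lia. Qed.

Lemma nth_rw_e4 lam q e1 e2 e3 e4 e5 : q.+3 <= size lam -> 2 <= nth 0 lam q.+2 ->
  nth 0 (rw (Tab lam q (F5 e1 e2 e3 e4 e5))) (size (Wb lam q) + (nth 0 lam q.+2 - 2)) = e4.
Proof.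
move=> hq hc; rewrite rw_Tab // nth_cat.
have ->: (size (Wb lam q) + (nth 0 lam q.+2 - 2) < size (Wb lam q)) = false by lia.
rewrite addKn mid_Wd /Wd -!catA nth_cat size_nseq ltnn subnn.
by [].
Qed.

Lemma F_T' lam q E E' i j : q.+3 <= size lam -> q < i <= q.+3 ->
  (exists l, unmatched i 0 0 (mid lam q E) = l ++ [:: j]) ->
  set_nth 0 (mid lam q E) j i.+1 = mid lam q E' ->
  crystalF i (Tab lam q E) = Some (Tab lam q E').
Proof. move=> h1 h2 [l hl] h3; exact: (F_T h1 h2 hl h3). Qed.

Lemma fs n T U i : 1 <= i <= n -> crystalF i T = Some U -> Ble n T U.
Proof. by move=> h1 h2; apply: rt_step; exists i. Qed.

Lemma bt n T U V : Ble n T U -> Ble n U V -> Ble n T V.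
Proof. move=> h1 h2; exact: rt_trans h1 h2. Qed.

Theorem lemma5p4 (lam : seq nat) (n : nat) :
  sorted geq lam -> all (fun x => 0 < x) lam -> size lam <= n ->
  (exists p, [/\ 1 <= p, p <= size lam - 2,
                 nth 0 lam p < nth 0 lam p.-1,
                 nth 0 lam p.+1 <= nth 0 lam p &
                 2 <= nth 0 lam p.+1]) ->
  ~ B_is_lattice n lam.
Proof.
move=> hs hpos hn [[|q] [h1 h2 h3 h4 h5]] hL //=.
rewrite /= in h3 h4 h5.
have hq : q.+3 <= size lam by lia.
set a := nth 0 lam q in h3 *; set b := nth 0 lam q.+1 in h3 h4 *;
set c := nth 0 lam q.+2 in h4 h5 *.
have hsb : 2 <= c <= b by apply/andP.
pose X := Tab lam q (F5 q.+1 q.+3 q.+2 q.+3 q.+4).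
pose X1 := Tab lam q (F5 q.+1 q.+3 q.+3 q.+3 q.+4).
pose Y := Tab lam q (F5 q.+2 q.+2 q.+3 q.+3 q.+4).
pose M := Tab lam q (F5 q.+2 q.+3 q.+3 q.+3 q.+4).
pose X2 := Tab lam q (F5 q.+1 q.+3 q.+2 q.+4 q.+4).
pose X3 := Tab lam q (F5 q.+1 q.+3 q.+3 q.+4 q.+4).
pose Y2 := Tab lam q (F5 q.+2 q.+2 q.+3 q.+4 q.+4).
pose Z := Tab lam q (F5 q.+2 q.+3 q.+3 q.+4 q.+4).
pose M' := Tab lam q (F5 q.+2 q.+4 q.+3 q.+3 q.+4).
have hX : is_ssyt n lam X by apply: ssyt_Tab => //; lia.
have hY : is_ssyt n lam Y by apply: ssyt_Tab => //; lia.
have hM : is_ssyt n lam M by apply: ssyt_Tab => //; lia.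
have hZ : is_ssyt n lam Z by apply: ssyt_Tab => //; lia.
have i1 : 1 <= q.+1 <= n by lia.
have i2 : 1 <= q.+2 <= n by lia.
have i3 : 1 <= q.+3 <= n by lia.
have s1 : crystalF q.+2 X = Some X1.
  apply: (F_T' (j := c + b - 1)); try lia; [exact: comp1 q a b c hsb h3 | by rewrite !mid_Wd setE3 //; lia].
have s2 : crystalF q.+1 X1 = Some M.
  apply: (F_T' (j := c + b + a - 2)); try lia; [exact: comp2 q a b c hsb h3 | by rewrite !mid_Wd setE1 //; lia].
have s3 : crystalF q.+2 Y = Some M.
  apply: (F_T' (j := c + b + a - 1)); try lia; [exact: comp3 q a b c hsb h3 | by rewrite !mid_Wd setE2 //; lia].
have s4 : crystalF q.+3 X = Some X2.
  apply: (F_T' (j := c - 2)); try lia; [exact: comp4 q a b c hsb h3 | by rewrite !mid_Wd setE4 //; lia].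
have s5 : crystalF q.+2 X2 = Some X3.
  apply: (F_T' (j := c + b - 1)); try lia; [exact: comp5 q a b c hsb h3 | by rewrite !mid_Wd setE3 //; lia].
have s6 : crystalF q.+1 X3 = Some Z.
  apply: (F_T' (j := c + b + a - 2)); try lia; [exact: comp6 q a b c hsb h3 | by rewrite !mid_Wd setE1 //; lia].
have s7 : crystalF q.+3 Y = Some Y2.
  apply: (F_T' (j := c - 2)); try lia; [exact: comp7 q a b c hsb h3 | by rewrite !mid_Wd setE4 //; lia].
have s8 : crystalF q.+2 Y2 = Some Z.
  apply: (F_T' (j := c + b + a - 1)); try lia; [exact: comp8 q a b c hsb h3 | by rewrite !mid_Wd setE2 //; lia].
have s9 : crystalF q.+3 M = Some M'.
  apply: (F_T' (j := c + b + a - 1)); try lia; [exact: comp9 q a b c hsb h3 | by rewrite !mid_Wd setE2 //; lia].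
have bXM : Ble n X M by exact: bt (fs i2 s1) (fs i1 s2).
have bYM : Ble n Y M by apply: fs i2 s3.
have bXZ : Ble n X Z.
  by exact: bt (fs i3 s4) (bt (fs i2 s5) (fs i1 s6)).
have bYZ : Ble n Y Z by exact: bt (fs i3 s7) (fs i2 s8).
have [[j [hj bXj bYj hjmin]] _] := hL X Y hX hY.
have bjM := hjmin M hM bXM bYM.
have bjZ := hjmin Z hZ bXZ bYZ.
have [l1 _] := Ble_rw bXj. have [l2 _] := Ble_rw bYj. have [l3 _] := Ble_rw bjM.
have hmax : maxle (rw X) (rw Y) (rw M).
  rewrite !rw_Tab // !mid_Wd /Wd -!catA !maxle_cat ?size_nseq // !maxle_refl /=.
  bsolve.
have ejM : rw j = rw M := maxle_eq l1 l2 l3 hmax.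
have jM : j = M by apply: (Ble_eq bjM); rewrite ejM.
rewrite jM in bjZ.
have sumMZ : sumn (rw Z) = (sumn (rw M)).+1.
  have [e1 _] := fstep_rw (ex_intro _ q.+3 (conj i3 s7) : fstep n Y Y2).
  have [e2 _] := fstep_rw (ex_intro _ q.+2 (conj i2 s8) : fstep n Y2 Z).
  have [e3 _] := fstep_rw (ex_intro _ q.+2 (conj i2 s3) : fstep n Y M).
  lia.
have [i [hi hF]] := Ble_one bjZ sumMZ.
have [k [hk hnk hrwZ]] := crystalF_step hF.
have eZ := nth_rw_e4 (q.+2) (q.+3) (q.+3) (q.+4) (q.+4) hq h5.
have eM := nth_rw_e4 (q.+2) (q.+3) (q.+3) (q.+3) (q.+4) hq h5.
rewrite -/Z in eZ; rewrite -/M in eM.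
move: eZ; rewrite hrwZ nth_set_nth /=.
case: eqP => [ek|_]; last by rewrite eM; lia.
move=> _; rewrite -ek eM in hnk; subst i.
rewrite s9 in hF; case: hF => eMZ.
have := nth_rw_e4 (q.+2) (q.+4) (q.+3) (q.+3) (q.+4) hq h5.
rewrite -/M' eMZ -/Z.
have := nth_rw_e4 (q.+2) (q.+3) (q.+3) (q.+4) (q.+4) hq h5.
rewrite -/Z => ->; lia.
Qed.
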